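(* For all $n,m$ and every distribution $\mathcal{D}$ supported on $[0,1]$, plurality is an $\alpha$-expected-welfare-maximizing rule for $\mathcal{D}$ with $\alpha=\max(\frac1m,\frac1n)$: for every preference profile $\sigma$, any alternative $p$ ranked first by the largest number of voters satisfies $\mathbb{E}[\mathrm{sw}(p,u)]\ge\max(\frac1m,\frac1n)\max_{j\in A}\mathbb{E}[\mathrm{sw}(j,u)]$.
   Context: There are $n$ voters and $m$ alternatives $A=\{1,\dots,m\}$. A preference profile $\sigma$ consists of a ranking of $A$ for each voter. Given $\mathcal{D}$ and $\sigma$, a random utility profile $u$ consistent with $\sigma$ is generated as follows: independently for each voter $i$, draw $m$ i.i.d. samples from $\mathcal{D}$ and assign them, from highest to lowest, to the alternatives in the order of voter $i$'s ranking. The social welfare of $j$ is $\mathrm{sw}(j,u)=\sum_i u_{ij}$; expectations are over $u$. *)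

(* Defs.v *)
From HB Require Import structures.
From mathcomp Require Import all_boot all_order all_algebra all_fingroup.
From mathcomp Require Import all_classical all_reals all_analysis.
Set Implicit Arguments. Unset Strict Implicit. Unset Printing Implicit Defensive.
Import Order.TTheory GRing.Theory Num.Theory.
Local Open Scope ring_scope.
Local Open Scope classical_set_scope.

Section Defs.
Variable R : realType.
Variable D : probability R R.

(* Expectation of [f] when the coordinates indexed by the (duplicate-free)
   list [s] of an assignment [I -> R] are drawn i.i.d. from [D]
   (iterated integrals = integral against the product measure D^|s|);
   coordinates not in [s] are set to 0. *)
Fixpoint iid_expect (I : eqType) (s : seq I) (f : (I -> R) -> R) : R :=
  match s with
  | [::] => f (fun _ => 0)
  | a :: s' => Rintegral D setT
      (fun x => iid_expect s' (fun g => f (fun b => if b == a then x else g b)))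
  end.

(* A preference profile: [sigma i j] is the position (0 = top) of alternative
   [j] in voter [i]'s ranking. *)
Definition profile (n m : nat) := 'I_n -> {perm 'I_m}.

(* Random utility profile consistent with [sigma], as a function of the
   n*m i.i.d. samples [x]: voter i's m samples are sorted from highest to
   lowest and assigned to the alternatives in the order of voter i's ranking. *)
Definition utility (n m : nat) (sigma : profile n m) (x : 'I_n * 'I_m -> R)
    (i : 'I_n) (j : 'I_m) : R :=
  nth 0 (sort (fun a b : R => b <= a) [seq x (i, k) | k <- enum 'I_m])
        (sigma i j).

Definition sw (n m : nat) (sigma : profile n m) (x : 'I_n * 'I_m -> R)
    (j : 'I_m) : R :=
  \sum_(i < n) utility sigma x i j.

Definition expected_sw (n m : nat) (sigma : profile n m) (j : 'I_m) : R :=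
  iid_expect (enum {: 'I_n * 'I_m}) (fun x => sw sigma x j).

End Defs.

Definition plurality_score (n m : nat) (sigma : 'I_n -> {perm 'I_m}) (j : 'I_m) : nat :=
  #|[set i : 'I_n | nat_of_ord (sigma i j) == 0%N]|.

Definition plurality_winner (n m : nat) (sigma : 'I_n -> {perm 'I_m}) (p : 'I_m) : Prop :=
  forall j : 'I_m, (plurality_score sigma j <= plurality_score sigma p)%N.

(* Main.v *)
Require Import Defs.
From HB Require Import structures.
From mathcomp Require Import all_boot all_order all_algebra all_fingroup.
From mathcomp Require Import all_classical all_reals all_analysis.
From mathcomp Require Import measurable_realfun lra.
Import Order.TTheory GRing.Theory Num.Theory.
Import numFieldNormedType.Exports.
Set Implicit Arguments. Unset Strict Implicit. Unset Printing Implicit Defensive.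
Local Open Scope ring_scope.
Local Open Scope classical_set_scope.

Section OneD.
Variables (R : realType) (D : probability R R) (hD : D `[0%R, 1%R] = 1%E).

Definition lip (h : R -> R) := exists L, 0 <= L /\ forall x y, `|h x - h y| <= L * `|x - y|.

Lemma lip_cont h : lip h -> continuous h.
Proof.
move=> [L [L0 hL]] x; apply/cvgrPdist_lt => e e0.
have L1 : 0 < L + 1 by rewrite ltr_wpDl.
near=> y.
apply: (le_lt_trans (hL x y)).
apply: (@le_lt_trans _ _ ((L+1) * `|x - y|)).
  by rewrite ler_wpM2r // lerDl.
rewrite -ltr_pdivlMl //.
near: y.
apply/nbhs_normP; exists ((L+1)^-1 * e) => /=; first by rewrite mulr_gt0 // invr_gt0.
by move=> y.
Unshelve. all: by end_near. Qed.

Lemma lip_mfun h : lip h -> measurable_fun setT h.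
Proof. by move=> /lip_cont; apply: continuous_measurable_fun. Qed.

Lemma lip_int h : lip h -> D.-integrable `[0%R, 1%R] (EFin \o h).
Proof.
move=> hh; have [L [L0 hL]] := hh.
apply: measurable_bounded_integrable => //.
- by rewrite (le_lt_trans (probability_le1 _ _)) ?ltry.
- exact: measurable_funTS (lip_mfun hh).
- exists (`|h 0| + L); split; first by rewrite num_real.
  move=> M hM x /=; rewrite in_itv /= => /andP[x0 x1].
  apply: (le_trans _ (ltW hM)).
  have := hL x 0; rewrite subr0 => H.
  apply: (le_trans (_ : _ <= `|h 0| + `|h x - h 0|)).
    by rewrite -{1}(subrK (h 0) (h x)) addrC (le_trans (ler_normD _ _)) // addrC.
  rewrite lerD2l (le_trans H) // ger0_norm // ler_piMr //.
Qed.

Lemma int_setT h : lip h ->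
  (\int[D]_(x in setT) (h x)%:E = \int[D]_(x in `[0%R, 1%R]) (h x)%:E)%E.
Proof.
move=> hh.
have mI : measurable (`[0%R, 1%R] : set R) by [].
have mC : measurable (~` (`[0%R, 1%R] : set R)) by exact: measurableC.
have mf : measurable_fun setT (EFin \o h) by apply/measurable_EFinP; exact: lip_mfun.
rewrite -(setUv `[0%R, 1%R]) integral_setU //; last by apply/disj_setPCl.
have H0 : (\int[D]_(x in ~` `[0%R, 1%R]) (h x)%:E = 0)%E.
  apply: null_set_integral => //; first exact: measurable_funTS.
  have := probability_setC D mI; rewrite hD subee; exact.
- by rewrite H0 adde0.
by rewrite setUv.
Qed.

Definition RI (h : R -> R) := Rintegral D setT h.

Lemma RI_01 h : lip h -> RI h = Rintegral D `[0%R, 1%R] h.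
Proof. by move=> hh; rewrite /RI /Rintegral int_setT. Qed.

Lemma RI_cst c : RI (fun _ => c) = c.
Proof. rewrite /RI Rintegral_cst //. have P1 := probability_setT D.
rewrite [fine _](_ : _ = 1) ?mulr1 //; exact: (congr1 fine P1). Qed.

Lemma RI_add h1 h2 : lip h1 -> lip h2 -> RI (fun x => h1 x + h2 x) = RI h1 + RI h2.
Proof.
move=> l1 l2.
have l12 : lip (fun x => h1 x + h2 x).
  have [L1 [L10 H1]] := l1; have [L2 [L20 H2]] := l2.
  exists (L1 + L2); split; first exact: addr_ge0.
  move=> x y; rewrite opprD addrACA mulrDl (le_trans (ler_normD _ _)) //.
  exact: lerD.
rewrite !RI_01 // RintegralD //; exact: lip_int.
Qed.

Lemma RI_le h1 h2 : lip h1 -> lip h2 ->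
  (forall x, 0 <= x <= 1 -> h1 x <= h2 x) -> RI h1 <= RI h2.
Proof.
move=> l1 l2 H; rewrite !RI_01 //; apply: le_Rintegral; [by []| exact: lip_int | exact: lip_int | ].
by move=> x; rewrite /= in_itv /=; apply: H.
Qed.
End OneD.

Section Multi.
Variables (R : realType) (D : probability R R) (hD : D `[0%R, 1%R] = 1%E).
Variable I : eqType.

Definition upd (a : I) (x : R) (g : I -> R) := fun b => if b == a then x else g b.

Lemma iid_cons a s f :
  iid_expect D (a :: s) f = RI D (fun x => iid_expect D s (fun g => f (upd a x g))).
Proof. by []. Qed.

Definition Lipf (s : seq I) (f : (I -> R) -> R) :=
  exists L, 0 <= L /\ forall g g', `|f g - f g'| <= L * \sum_(b <- s) `|g b - g' b|.

Lemma Lipf_upd a s f x : Lipf (a :: s) f -> Lipf s (fun g => f (upd a x g)).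
Proof.
move=> [L [L0 H]]; exists L; split => // g g'.
apply: (le_trans (H _ _)); rewrite ler_wpM2l // big_cons /upd eqxx subrr normr0 add0r.
apply: ler_sum => b _; case: (b == a) => //; rewrite subrr normr0 //.
Qed.

Lemma Lipf_cst s c : Lipf s (fun _ => c).
Proof. by exists 0; split => // g g'; rewrite subrr normr0 mul0r. Qed.

Lemma Lipf_add s f1 f2 : Lipf s f1 -> Lipf s f2 -> Lipf s (fun g => f1 g + f2 g).
Proof.
move=> [L1 [L10 H1]] [L2 [L20 H2]]; exists (L1 + L2); split; first exact: addr_ge0.
move=> g g'; rewrite opprD addrACA mulrDl (le_trans (ler_normD _ _)) //.
exact: lerD.
Qed.

Lemma iid_cst (s : seq I) c : iid_expect D s (fun _ => c) = c.
Proof.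
elim: s => [//|a s IH]; rewrite iid_cons.
under eq_fun do rewrite IH.
exact: RI_cst.
Qed.

Lemma sum_le_size (s : seq I) (F : I -> R) c : (forall b, F b <= c) ->
  \sum_(b <- s) F b <= (size s)%:R * c.
Proof.
move=> H; elim: s => [|b s IH]; first by rewrite big_nil mul0r.
by rewrite big_cons /= -natr1 mulrDl mul1r addrC lerD.
Qed.

Definition in01 (s : seq I) (g : I -> R) := forall b, b \in s -> 0 <= g b <= 1.

Lemma iid_props s :
  (forall f1 f2, Lipf s f1 -> Lipf s f2 ->
     iid_expect D s (fun g => f1 g + f2 g) = iid_expect D s f1 + iid_expect D s f2) /\
  (forall f1 f2, Lipf s f1 -> Lipf s f2 ->
     (forall g, in01 s g -> f1 g <= f2 g) -> iid_expect D s f1 <= iid_expect D s f2).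
Proof.
elim: s => [|a s [IHa IHb]].
  split; first by [].
  by move=> f1 f2 _ _ H; apply: H => b; rewrite in_nil.
have addc : forall f c, Lipf s f -> iid_expect D s (fun g => f g + c) = iid_expect D s f + c.
  by move=> f c Hf; rewrite IHa ?iid_cst //; exact: Lipf_cst.
have lipp : forall f, Lipf (a :: s) f -> lip (fun x => iid_expect D s (fun g => f (upd a x g))).
  move=> f Hf; have [L [L0 H]] := Hf.
  exists (L * (size s).+1%:R); split; first by rewrite mulr_ge0.
  suff K : forall x y, iid_expect D s (fun g => f (upd a x g)) <=
       iid_expect D s (fun g => f (upd a y g)) + L * (size s).+1%:R * `|x - y|.
    move=> x y; have := K x y; have := K y x; rewrite (distrC y x).
    set A := iid_expect _ _ _; set B := iid_expect _ _ _; set C := _ * `|_|.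
    move=> H1 H2; rewrite ler_norml; apply/andP; split; lra.
  move=> x y; rewrite -addc; last exact: Lipf_upd.
  apply: IHb; [exact: Lipf_upd | apply: Lipf_add; [exact: Lipf_upd|exact: Lipf_cst] |].
  move=> g _.
  have HH := H (upd a x g) (upd a y g).
  have B : \sum_(b <- a :: s) `|upd a x g b - upd a y g b| <= (size s).+1%:R * `|x - y|.
    rewrite big_cons /upd eqxx -natr1 mulrDl mul1r addrC lerD2r.
    apply: sum_le_size => b; case: (b == a) => //; rewrite subrr normr0 //.
  have B2 := ler_wpM2l L0 B.
  have B3 := ler_norm (f (upd a x g) - f (upd a y g)).
  rewrite mulrA in B2.
  move: HH B2 B3; set C := _ * `|_|; set S := \sum_(b <- _) _; set N := `|_|.
  move=> HH B2 B3; lra.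
split.
  move=> f1 f2 H1 H2; rewrite !iid_cons.
  transitivity (RI D (fun x => iid_expect D s (fun g => f1 (upd a x g)) +
                               iid_expect D s (fun g => f2 (upd a x g)))).
    by congr RI; apply: funext => x; apply: IHa; exact: Lipf_upd.
  exact: (RI_add hD (lipp _ H1) (lipp _ H2)).
move=> f1 f2 H1 H2 H; rewrite !iid_cons.
apply: (RI_le hD (lipp _ H1) (lipp _ H2)).
move=> x hx; apply: IHb; try exact: Lipf_upd.
move=> g hg; apply: H => b; rewrite in_cons /upd; case: (b == a) => //= hb.
exact: hg.
Qed.
End Multi.

Section Struct.
Variables (R : realType) (D : probability R R).

Section OneType.
Variable I : eqType.
Definition indep (a : I) (f : (I -> R) -> R) := forall g y, f (upd a y g) = f g.

Lemma indep_upd a b x f : indep b f -> indep b (fun g => f (upd a x g)).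
Proof.
move=> H g y /=; case: (eqVneq b a) => [->|nba].
  by congr f; apply: funext => c; rewrite /upd; case: (c == a).
rewrite (_ : upd a x (upd b y g) = upd b y (upd a x g)) ?H //.
apply: funext => c; rewrite /upd; case: (eqVneq c a) => [->|ca].
  by rewrite eq_sym (negbTE nba).
by [].
Qed.

Lemma iid_indep_cons a (s : seq I) f : indep a f -> iid_expect D (a :: s) f = iid_expect D s f.
Proof.
move=> H; rewrite iid_cons.
rewrite (_ : (fun x => iid_expect D s (fun g => f (upd a x g))) = fun _ => iid_expect D s f).
  exact: RI_cst.
by apply: funext => x; congr iid_expect; apply: funext => g; exact: H.
Qed.

Lemma iid_drop_pre (s1 s : seq I) f : (forall a, a \in s1 -> indep a f) ->
  iid_expect D (s1 ++ s) f = iid_expect D s f.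
Proof.
elim: s1 => [//|a s1 IH] H; rewrite cat_cons.
rewrite (iid_indep_cons _ (H a _)) ?mem_head // IH // => b hb.
by apply: H; rewrite in_cons hb orbT.
Qed.

Lemma iid_drop_post (s1 s2 : seq I) f : (forall a, a \in s2 -> indep a f) ->
  iid_expect D (s1 ++ s2) f = iid_expect D s1 f.
Proof.
elim: s1 f => [|a s1 IH] f H.
  by have := iid_drop_pre [::] H; rewrite cats0.
rewrite cat_cons !iid_cons; congr RI; apply: funext => x; apply: IH => b hb.
by apply: indep_upd; exact: H.
Qed.

Lemma Lipf_sumr (T : Type) (r : seq T) (s : seq I) (F : T -> (I -> R) -> R) :
  (forall i, Lipf s (F i)) -> Lipf s (fun g => \sum_(i <- r) F i g).
Proof.
move=> H; elim: r => [|i r IH].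
  by under eq_fun do rewrite big_nil; exact: Lipf_cst.
under eq_fun do rewrite big_cons; exact: Lipf_add.
Qed.

Lemma iid_sumr (hD : D `[0%R, 1%R] = 1%E) (T : Type) (r : seq T) (s : seq I)
    (F : T -> (I -> R) -> R) :
  (forall i, Lipf s (F i)) ->
  iid_expect D s (fun g => \sum_(i <- r) F i g) = \sum_(i <- r) iid_expect D s (F i).
Proof.
move=> H; elim: r => [|i r IH].
  by under eq_fun do rewrite big_nil; rewrite big_nil iid_cst.
under eq_fun do rewrite big_cons.
rewrite big_cons ((iid_props hD s).1 _ _ (H i) (Lipf_sumr r H)) IH //.
Qed.
End OneType.

Lemma iid_rename (I J : eqType) (phi : I -> J) (inj : injective phi) (s : seq I) f1 f2 :
  (forall g : J -> R, f2 g = f1 (fun b => g (phi b))) ->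
  iid_expect D (map phi s) f2 = iid_expect D s f1.
Proof.
elim: s f1 f2 => [|a s IH] f1 f2 H; first exact: H.
rewrite map_cons !iid_cons; congr RI; apply: funext => x; apply: IH => g.
by rewrite H; congr f1; apply: funext => b; rewrite /upd (inj_eq inj).
Qed.
End Struct.

Section OS.
Variable R : realType.
Definition geR := fun a b : R => b <= a.

Lemma geR_tr : transitive geR.
Proof. by move=> y x z; rewrite /geR => H1 H2; exact: le_trans H2 H1. Qed.
Lemma geR_refl : reflexive geR.
Proof. by move=> x; rewrite /geR. Qed.
Lemma geR_total : total geR.
Proof. by move=> x y; rewrite /geR le_total. Qed.

Lemma nth_mono (s : seq R) i j : sorted geR s -> (i <= j)%N -> (j < size s)%N ->
  nth 0 s j <= nth 0 s i.
Proof.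
move=> ss ij js.
have := sorted_leq_nth geR_tr geR_refl 0 ss; apply; rewrite ?inE //; exact: leq_ltn_trans ij js.
Qed.

Lemma count_gt (s : seq R) k t : sorted geR s -> (k < size s)%N ->
  (t < nth 0 s k) = (k < count (fun v => (t < v)%R) s)%N.
Proof.
move=> ss ks; apply/idP/idP => H.
  rewrite -(cat_take_drop k.+1 s) count_cat.
  have -> : count (fun v => (t < v)%R) (take k.+1 s) = k.+1.
    apply/eqP; rewrite -[X in _ == X](@size_takel k.+1 _ s ks) -all_count.
    apply/allP => v /(nthP 0) [l hl <-]; rewrite size_takel // in hl.
    rewrite nth_take //; apply: (lt_le_trans H); apply: nth_mono => //.
  by rewrite ltnS leq_addr.
apply/negPn/negP; rewrite -leNgt => Hk.
move: H; apply/negP; rewrite -leqNgt.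
rewrite -(cat_take_drop k s) count_cat.
have -> : count (fun v => (t < v)%R) (drop k s) = 0%N.
  apply/eqP; rewrite -leqn0 leqNgt -has_count; apply/hasPn => v /(nthP 0) [l hl <-].
  rewrite size_drop in hl; rewrite nth_drop -leNgt; apply: le_trans Hk.
  apply: nth_mono => //; [exact: leq_addr | by rewrite -ltn_subRL].
rewrite addn0; apply: (leq_trans (count_size _ _)); rewrite size_take ks //.
Qed.

Lemma os_le (T : Type) (E : seq T) (h h' : T -> R) C k : (k < size E)%N ->
  (forall l, h l <= h' l + C) ->
  nth 0 (sort geR (map h E)) k <= nth 0 (sort geR (map h' E)) k + C.
Proof.
move=> kE H; rewrite leNgt; apply/negP => Hlt.
set sy := sort geR _ in Hlt; set sx := sort geR _ in Hlt.
have ssx : sorted geR sx by apply: sort_sorted; exact: geR_total.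
have ssy : sorted geR sy by apply: sort_sorted; exact: geR_total.
have Px : perm_eq sx (map h E) by rewrite /sx perm_sort.
have Py : perm_eq sy (map h' E) by rewrite /sy perm_sort.
have kx : (k < size sx)%N by rewrite size_sort size_map.
have ky : (k < size sy)%N by rewrite size_sort size_map.
move: Hlt; rewrite (count_gt _ ssx kx) (seq.permP Px) count_map => Hc.
have : (k < count (fun v => (nth 0 sy k < v)%R) sy)%N.
  rewrite (seq.permP Py) count_map; apply: (leq_trans Hc); apply: sub_count => l /=.
  by move=> Hl; rewrite -(ltrD2r C); exact: lt_le_trans Hl (H l).
by rewrite -count_gt // ltxx.
Qed.

Lemma os_ge0 (T : eqType) (E : seq T) (h : T -> R) k : (k < size E)%N ->
  (forall l, 0 <= h l) -> 0 <= nth 0 (sort geR (map h E)) k.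
Proof.
move=> kE H.
have : nth 0 (sort geR (map h E)) k \in sort geR (map h E).
  by apply: mem_nth; rewrite size_sort size_map.
have P : perm_eq (sort geR (map h E)) (map h E) by rewrite perm_sort.
by rewrite (perm_mem P) => /mapP [l hl ->]; exact: H.
Qed.

Lemma os_top (T : Type) (E : seq T) (h : T -> R) k : (k < size E)%N ->
  nth 0 (sort geR (map h E)) k <= nth 0 (sort geR (map h E)) 0.
Proof.
move=> kE; apply: nth_mono => //; first exact: sort_sorted geR_total _.
by rewrite size_sort size_map.
Qed.
End OS.

Lemma term_le_sum (R : realType) (I : eqType) (s : seq I) (F : I -> R) b :
  b \in s -> (forall c, 0 <= F c) -> F b <= \sum_(c <- s) F c.
Proof.
move=> hb H; elim: s hb => [//|c s IH]; rewrite in_cons big_cons => /orP[/eqP->|hb].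
  by rewrite lerDl sumr_ge0.
by rewrite (le_trans (IH hb)) // lerDr.
Qed.

Section Final.
Variables (R : realType) (D : probability R R) (hD : D `[0%R, 1%R] = 1%E).
Variables (n m : nat).

Definition os (k : nat) (h : 'I_m -> R) := nth 0 (sort (@geR R) (map h (enum 'I_m))) k.
Definition cc k := iid_expect D (enum 'I_m) (os k).

Lemma Lipf_os (I : eqType) (s : seq I) (phi : 'I_m -> I) k : (forall l, phi l \in s) ->
  (k < m)%N -> Lipf s (fun x => os k (fun l => x (phi l))).
Proof.
move=> Hs km; exists 1; split => // g g'; rewrite mul1r.
have kE : (k < size (enum 'I_m))%N by rewrite size_enum_ord.
have T l : `|g (phi l) - g' (phi l)| <= \sum_(b <- s) `|g b - g' b|.
  by apply: (term_le_sum (F := fun b => `|g b - g' b|)) => // c.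
rewrite ler_norml; apply/andP; split.
  rewrite lerNl opprB lerBlDr addrC; apply: os_le => // l.
  by have := T l; rewrite distrC ler_norml => /andP[_]; rewrite lerBlDr addrC.
rewrite lerBlDr addrC; apply: os_le => // l.
by have := T l; rewrite ler_norml => /andP[_]; rewrite lerBlDr addrC.
Qed.

Lemma Lipf_os_id k : (k < m)%N -> Lipf (enum 'I_m) (os k).
Proof.
move=> hk; have H : forall l : 'I_m, id l \in enum 'I_m by move=> l; rewrite mem_enum.
exact: (Lipf_os H hk).
Qed.

Lemma cc_top k : (k < m)%N -> cc k <= cc 0.
Proof.
move=> km; apply: (iid_props hD _).2; [exact: Lipf_os_id | |].
  by apply: Lipf_os_id; exact: (leq_ltn_trans (leq0n k) km).
move=> g _; apply: os_top; by rewrite size_enum_ord.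
Qed.

Lemma cc_ge0 k : (k < m)%N -> 0 <= cc k.
Proof.
move=> km; rewrite -(iid_cst D (enum 'I_m) 0).
apply: (iid_props hD _).2; [exact: Lipf_cst | exact: Lipf_os_id |].
move=> g Hg; apply: os_ge0; first by rewrite size_enum_ord.
by move=> l; have /andP[] := Hg l (mem_enum _ l).
Qed.

Variable sigma : profile n m.

Lemma util_os x i j : utility sigma x i j = os (sigma i j) (fun k => x (i, k)).
Proof. by []. Qed.

Lemma indep_util (i : 'I_n) (j : 'I_m) (b : 'I_n * 'I_m) : b.1 != i ->
  indep b (fun x : 'I_n * 'I_m -> R => utility sigma x i j).
Proof.
move=> hb g y; rewrite /utility; congr (nth _ (sort _ _) _); apply: eq_map => k.
rewrite /upd; have /negbTE -> // : (i, k) != b.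
by apply: contra hb => /eqP <- /=.
Qed.

Lemma E_util i j :
  iid_expect D (enum {: 'I_n * 'I_m}) (fun x => utility sigma x i j) = cc (sigma i j).
Proof.
have [p1 [p2 Ep]] : exists p1 p2, enum 'I_n = p1 ++ i :: p2.
  by case/splitPr: (mem_enum predT i) => p1 p2; exists p1, p2.
have U := enum_uniq (mem 'I_n); rewrite Ep cat_uniq /= in U.
case/and4P: U => _ /norP [ip1 _] ip2 _.
have -> : enum {: 'I_n * 'I_m} = prod_enum _ _ by rewrite enumT unlock.
rewrite /prod_enum Ep allpairs_cat /= iid_drop_pre; last first.
  move=> b /allpairsP [[x y] [hx _ ->]]; apply: indep_util => /=.
  by apply/eqP => E; move: ip1; rewrite -E hx.
rewrite iid_drop_post; last first.
  move=> b /allpairsP [[x y] [hx _ ->]]; apply: indep_util => /=.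
  by apply/eqP => E; move: ip2; rewrite -E hx.
have inj : injective (fun y : 'I_m => (i, y)) by move=> y1 y2 [].
exact: (iid_rename D inj).
Qed.

Lemma E_sw j : expected_sw D sigma j = \sum_(i < n) cc (sigma i j).
Proof.
rewrite /expected_sw /sw iid_sumr //; first by apply: eq_bigr => i _; exact: E_util.
move=> i; have H : forall l : 'I_m, (i, l) \in enum {: 'I_n * 'I_m} by move=> l; rewrite mem_enum.
exact: (Lipf_os H (ltn_ord (sigma i j))).
Qed.
End Final.

Lemma in_setb (T : Type) (b : T -> bool) x : (x \in in_set [set y | b y]) = b x.
Proof. by rewrite /in_mem /= /in_set asboolb. Qed.

Lemma score_sum n m (sigma : profile n m) (z : 'I_m) (hz : nat_of_ord z = 0%N) :
  (\sum_(j < m) plurality_score sigma j)%N = n.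
Proof.
rewrite /plurality_score.
under eq_bigr do rewrite -sum1_card big_mkcond /=.
rewrite exchange_big /=.
transitivity (\sum_(i < n) 1)%N; last by rewrite sum_nat_const card_ord muln1.
apply: eq_bigr => i _.
rewrite (bigD1 (((sigma i)^-1)%g z)) //= in_setb permKV hz eqxx big1 // => j hj; rewrite in_setb.
case: eqP => // H.
have E : sigma i j = z by apply: val_inj; rewrite /= H hz.
by rewrite -E permK eqxx in hj.
Qed.

Theorem theorem13 (R : realType) (n m : nat) (D : probability R R)
    (hD : D `[0%R, 1%R] = 1%E)
    (sigma : profile n m) (p : 'I_m) (hp : plurality_winner sigma p) :
  forall j : 'I_m,
    Num.max (m%:R^-1) (n%:R^-1) * expected_sw D sigma j <= expected_sw D sigma p.
Proof.
move=> j.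
have m0 : (0 < m)%N := leq_ltn_trans (leq0n j) (ltn_ord j).
pose z : 'I_m := Ordinal m0.
rewrite !(E_sw hD).
set c0 := cc D m 0.
have c00 : 0 <= c0 by apply: (cc_ge0 hD).
set s := plurality_score sigma p.
have b1 : \sum_(i < n) cc D m (sigma i j) <= n%:R * c0.
  apply: (le_trans (ler_sum _ (fun i _ => cc_top hD (ltn_ord (sigma i j))))); rewrite -/c0.
  by rewrite sumr_const card_ord mulr_natl.
have b2 : s%:R * c0 <= \sum_(i < n) cc D m (sigma i p).
  have -> : s%:R * c0 = \sum_(i < n) (if nat_of_ord (sigma i p) == 0%N then c0 else 0).
    rewrite /s /plurality_score -sum1_card big_mkcond natr_sum mulr_suml.
    by apply: eq_bigr => i _; rewrite in_setb; case: ifP => _; rewrite ?mul1r ?mul0r.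
  apply: ler_sum => i _; case: eqP => [H|_]; last exact: (cc_ge0 hD).
  by rewrite H.
have hn : (n <= m * s)%N.
  rewrite -{1}(score_sum sigma (z := z)) //.
  apply: (@leq_trans (\sum_(j0 < m) s)); first by apply: leq_sum => k _; exact: hp.
  by rewrite sum_nat_const card_ord.
have s0 : (0 < n)%N -> (0 < s)%N.
  move=> n0; rewrite lt0n; apply/eqP => s0; move: hn; rewrite s0 muln0 leqn0 => /eqP n00.
  by rewrite n00 in n0.
set a := Num.max _ _.
have a0 : 0 <= a by rewrite le_max invr_ge0 ler0n.
have an : a * n%:R <= s%:R.
  have Hm : m%:R^-1 * n%:R <= s%:R :> R.
    rewrite mulrC ler_pdivrMr ?ltr0n // -natrM ler_nat mulnC //.
  have Hn : n%:R^-1 * n%:R <= s%:R :> R.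
    case: (posnP n) => [->|n0]; first by rewrite invr0 mul0r ler0n.
    by rewrite mulVf ?pnatr_eq0 -?lt0n // ler1n s0.
  rewrite /a; case: (leP (m%:R^-1 : R) n%:R^-1) => h.
    exact: Hn.
  exact: Hm.
apply: (le_trans (ler_wpM2l a0 b1)); rewrite mulrA.
apply: le_trans b2; exact: ler_wpM2r.
Qed.
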